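(* Let $d\in\mathbb N$, $l\in\mathbb Z_+^d$, $\rho,\sigma\in(0,\infty)^d$. There is a constant $c=c(d,l,\rho,\sigma)>0$ such that for all $x^0,y^0,X^0\in\mathbb R^d$ and $\delta,\eta,\Delta\in(0,\infty)^d$ with $$x^0+\sigma\delta I^d\subset y^0+\eta I^d\subset(y^0+\rho\delta I^d)\cap(X^0+\Delta I^d),$$ every $J\subset\{1,\dots,d\}$, every family of functions $\chi^j$ ($j\in J$) continuous on $\mathbb R$ with compact support and $\chi^j=1$ on $X^0_j+\Delta_jI$, and every $f\in C_0(\mathbb R^d)$, $$\Bigl\|\Bigl(\prod_{j\in J}V_j(E-M_{\chi^j}\mathcal P^{1,l_j}_{\sigma_j\delta_j,x^0_j})\Bigr)f\Bigr\|_{L_\infty(G)}\le c\|f\|_{L_\infty(G)},\qquad G=y^0+\eta I^d.$$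
   Context: $I=(0,1)$, $I^d=(0,1)^d$, products componentwise. For each $k\in\mathbb Z_+$ fixed distinct points $\xi^{k,0},\dots,\xi^{k,k}\in(0,1)$ are chosen; for $a\in\mathbb R$, $\delta>0$ and $g$ continuous on $(a,a+\delta)$, $\mathcal P^{1,k}_{\delta,a}g$ is the polynomial of degree $\le k$ interpolating $g$ at $a+\delta\xi^{k,\mu}$, $\mu=0,\dots,k$. $E$ is the identity and $E-M_\chi\mathcal P^{1,k}_{\delta,a}$ is the bounded operator on $C_0(\mathbb R)$, $g\mapsto g-\chi\cdot\mathcal P^{1,k}_{\delta,a}(g|_{(a,a+\delta)})$. $C_0(\mathbb R^d)$: continuous functions vanishing at infinity. For a bounded operator $T$ on $C_0(\mathbb R)$, $V_j(T)$ is the unique bounded operator on $C_0(\mathbb R^d)$ with $(V_j(T)f)(x)=(T(f(x_1,\dots,x_{j-1},\cdot,x_{j+1},\dots,x_d)))(x_j)$; these commute for different $j$. *)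

(* Defs.v *)
From HB Require Import structures.
From mathcomp Require Import all_boot all_order all_algebra.
From mathcomp Require Import all_classical all_reals topology normedtype.
Set Implicit Arguments. Unset Strict Implicit. Unset Printing Implicit Defensive.
Import Order.TTheory GRing.Theory Num.Theory.
Import numFieldNormedType.Exports.
Local Open Scope classical_set_scope.
Local Open Scope ring_scope.

(* Points of R^d are row vectors 'rV[R]_d (sup norm); coordinate i of x is x ord0 i. *)

(* The open box a + h I^d = prod_i (a_i, a_i + h_i), for h with positive entries. *)
Definition box (R : realType) (d : nat) (a h : 'rV[R]_d) : set 'rV[R]_d :=
  [set y | forall i, a ord0 i < y ord0 i < a ord0 i + h ord0 i].

Definition upd (R : realType) (d : nat) (x : 'rV[R]_d) (j : 'I_d) (t : R) : 'rV[R]_d :=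
  \row_i (if i == j then t else x ord0 i).

(* Lagrange interpolation: P^{1,k}_{delta,a} g, the polynomial of degree <= k
   interpolating g at the nodes a + delta * xi k mu, mu = 0..k, evaluated at t. *)
Definition interp (R : realType) (xi : nat -> nat -> R) (k : nat) (delta a : R)
  (g : R -> R) (t : R) : R :=
  \sum_(mu < k.+1)
     g (a + delta * xi k mu) *
     \prod_(nu < k.+1 | nu != mu)
        ((t - (a + delta * xi k nu)) / (delta * xi k mu - delta * xi k nu)).

Definition EmMP (R : realType) (xi : nat -> nat -> R) (k : nat) (delta a : R)
  (chi : R -> R) (g : R -> R) (t : R) : R :=
  g t - chi t * interp xi k delta a g t.

Definition Vj (R : realType) (d : nat) (j : 'I_d) (T : (R -> R) -> R -> R)
  (f : 'rV[R]_d -> R) : 'rV[R]_d -> R :=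
  fun x => T (fun t => f (upd x j t)) (x ord0 j).

(* prod_{j in J} Op j, composed along the enumeration of J
   (the factors commute, so the order is immaterial). *)
Definition prodV (R : realType) (d : nat) (J : {set 'I_d})
  (Op : 'I_d -> ('rV[R]_d -> R) -> 'rV[R]_d -> R)
  (f : 'rV[R]_d -> R) : 'rV[R]_d -> R :=
  foldr (fun j g => Op j g) f (enum J).

Definition C0 (R : realType) (d : nat) (f : 'rV[R]_d -> R) : Prop :=
  continuous f /\
  forall e : R, 0 < e -> exists r : R, forall x : 'rV[R]_d,
      r < `|x| -> `|f x| < e.

Definition Cc (R : realType) (chi : R -> R) : Prop :=
  continuous chi /\ compact (closure [set t | chi t != 0]).

(* Main.v *)
Require Import Defs.
From HB Require Import structures.
From mathcomp Require Import all_boot all_order all_algebra.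
From mathcomp Require Import all_classical all_reals topology normedtype.
From mathcomp Require Import ring lra.
Import Order.TTheory GRing.Theory Num.Theory.
Import numFieldNormedType.Exports.
Local Open Scope classical_set_scope.
Local Open Scope ring_scope.

Lemma box_coord (R : realType) (d : nat) (a h b k : 'rV[R]_d) :
  (forall i, 0 < h ord0 i) -> box a h `<=` box b k ->
  forall j t, a ord0 j < t < a ord0 j + h ord0 j ->
              b ord0 j < t < b ord0 j + k ord0 j.
Proof.
move=> hp sub j t ht.
pose z : 'rV[R]_d := \row_i (if i == j then t else a ord0 i + h ord0 i / 2).
have zin : box a h z.
  move=> i; rewrite /z mxE; case: eqP => [->|_] //.
  have := hp i; lra.
have := sub z zin j; by rewrite /z mxE eqxx.
Qed.

Lemma upd_in (R : realType) (d : nat) (b k y : 'rV[R]_d) j t :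
  box b k y -> b ord0 j < t < b ord0 j + k ord0 j -> box b k (upd y j t).
Proof.
move=> hy ht i; rewrite /upd mxE; case: eqP => [->|_] //; exact: hy.
Qed.

Lemma updK (R : realType) (d : nat) (y : 'rV[R]_d) j : upd y j (y ord0 j) = y.
Proof.
apply/rowP => i; rewrite /upd mxE; case: eqP => [->|_] //.
Qed.

Lemma interp_bound (R : realType) (xi : nat -> nat -> R) (k : nat)
  (hxi_inj : forall mu nu : nat, (mu <= k)%N -> (nu <= k)%N ->
                xi k mu = xi k nu -> mu = nu)
  (rho sigma delta a t M : R) (g : R -> R) :
  0 < rho -> 0 < sigma -> 0 < delta -> 0 <= M ->
  (forall mu : 'I_k.+1, `|g (a + sigma * delta * xi k mu)| <= M) ->
  (forall nu : 'I_k.+1, `|t - (a + sigma * delta * xi k nu)| <= rho * delta) ->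
  `|interp xi k (sigma * delta) a g t| <=
    M * \sum_(mu < k.+1) \prod_(nu < k.+1 | nu != mu)
          (rho / (sigma * `|xi k mu - xi k nu|)).
Proof.
move=> hr hs hd hM hg ht.
rewrite /interp mulr_sumr.
apply: (le_trans (ler_norm_sum _ _ _)).
apply: ler_sum => mu _.
rewrite normrM normr_prod.
apply: ler_pM => //; first exact: prodr_ge0.
apply: ler_prod => nu hnu; rewrite normr_ge0 /=.
have hD : 0 < `|xi k mu - xi k nu|.
  rewrite normr_gt0 subr_eq0; apply/eqP => E.
  move/eqP: hnu; apply; apply/val_inj/hxi_inj => //; by rewrite -ltnS ltn_ord.
rewrite -mulrBr normf_div normrM (gtr0_norm (mulr_gt0 hs hd)).
have -> : rho / (sigma * `|xi k mu - xi k nu|)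
   = rho * delta / (sigma * delta * `|xi k mu - xi k nu|).
  field; rewrite ?gt_eqF //.
apply: ler_wpM2r; last exact: ht.
by rewrite invr_ge0 mulr_ge0 // mulr_ge0 // ltW.
Qed.
Theorem lemma2p1p6 (R : realType) (xi : nat -> nat -> R)
  (hxi : forall k mu : nat, (mu <= k)%N -> 0 < xi k mu < 1)
  (hxi_inj : forall k mu nu : nat, (mu <= k)%N -> (nu <= k)%N ->
                xi k mu = xi k nu -> mu = nu)
  (d : nat) (l : 'I_d -> nat) (rho sigma : 'rV[R]_d)
  (hrho : forall i, 0 < rho ord0 i) (hsigma : forall i, 0 < sigma ord0 i) :
  exists c : R, 0 < c /\
  forall (x0 y0 X0 delta eta Delta : 'rV[R]_d),
    (forall i, 0 < delta ord0 i) -> (forall i, 0 < eta ord0 i) ->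
    (forall i, 0 < Delta ord0 i) ->
    box x0 (\row_i (sigma ord0 i * delta ord0 i)) `<=` box y0 eta ->
    box y0 eta `<=` box y0 (\row_i (rho ord0 i * delta ord0 i)) `&` box X0 Delta ->
  forall (J : {set 'I_d}) (chi : 'I_d -> R -> R),
    (forall j, j \in J -> Cc (chi j) /\
        forall t, X0 ord0 j < t < X0 ord0 j + Delta ord0 j -> chi j t = 1) ->
  forall f : 'rV[R]_d -> R, C0 f ->
  forall M : R, (forall y, box y0 eta y -> `|f y| <= M) ->
  forall x, box y0 eta x ->
    `|prodV J (fun j => Vj j (EmMP xi (l j)
                 (sigma ord0 j * delta ord0 j) (x0 ord0 j) (chi j))) f x|
      <= c * M.
Proof.
pose C := fun j : 'I_d => 1 + \sum_(mu < (l j).+1) \prod_(nu < (l j).+1 | nu != mu)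
          (rho ord0 j / (sigma ord0 j * `|xi (l j) mu - xi (l j) nu|)).
have C1 : forall j, 1 <= C j.
  move=> j; rewrite /C lerDl; apply: sumr_ge0 => mu _; apply: prodr_ge0 => nu _.
  by rewrite divr_ge0 ?mulr_ge0 // ltW.
have Cprod1 : forall (P : pred 'I_d), 1 <= \prod_(j | P j) C j.
  by move=> P; apply: (big_ind (fun x => 1 <= x)) => // u v; apply: mulr_ege1.
exists (\prod_j C j); split.
  by apply: (lt_le_trans ltr01); apply: Cprod1.
move=> x0 y0 X0 delta eta Delta hdelta heta hDelta sub1 sub2 J chi hchi f _ M hM x hx.
have hs : forall i, 0 < (\row_i (sigma ord0 i * delta ord0 i) : 'rV[R]_d) ord0 i.
  by move=> i; rewrite mxE mulr_gt0.
have sub2a : box y0 eta `<=` box y0 (\row_i (rho ord0 i * delta ord0 i)).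
  by move=> z /sub2 [].
have sub2b : box y0 eta `<=` box X0 Delta.
  by move=> z /sub2 [].
have step : forall j, j \in J -> forall (g : 'rV[R]_d -> R) Mg, 0 <= Mg ->
    (forall y, box y0 eta y -> `|g y| <= Mg) ->
    forall y, box y0 eta y ->
    `|Vj j (EmMP xi (l j) (sigma ord0 j * delta ord0 j) (x0 ord0 j) (chi j)) g y|
      <= C j * Mg.
  move=> j jJ g Mg hMg hg y hy.
  rewrite /Vj /EmMP updK.
  have -> : chi j (y ord0 j) = 1.
    apply: (proj2 (hchi j jJ)); exact: (sub2b y hy j).
  rewrite mul1r.
  have nodeG : forall mu : 'I_(l j).+1,
      box y0 eta (upd y j (x0 ord0 j + sigma ord0 j * delta ord0 j * xi (l j) mu)).
    move=> mu; apply: upd_in => //.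
    apply: (@box_coord _ _ _ _ _ _ hs sub1); rewrite mxE.
    have := hxi (l j) mu; rewrite -ltnS ltn_ord => /(_ isT) /andP [h0 h1].
    have := mulr_gt0 (hsigma j) (hdelta j) => hsd.
    apply/andP; split; first by rewrite ltrDl mulr_gt0.
    by rewrite ltrD2l gtr_pMr.
  apply: (le_trans (ler_normB _ _)).
  rewrite /C mulrDl mul1r; apply: lerD; first exact: hg.
  rewrite [_ * Mg]mulrC; apply: interp_bound => //.
  - by move=> mu nu hmu hnu; apply: hxi_inj.
  - by move=> mu; apply: hg.
  - move=> nu; have := sub2a _ (nodeG nu) j; have := sub2a _ hy j.
    rewrite /upd !mxE eqxx => /andP [a1 a2] /andP [b1 b2].
    rewrite ler_norml; apply/andP; split; lra.
have M0 : 0 <= M by apply: le_trans (hM x hx); apply: normr_ge0.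
have fold : forall s : seq 'I_d, {subset s <= J} -> forall y, box y0 eta y ->
   `|foldr (fun j g => Vj j (EmMP xi (l j) (sigma ord0 j * delta ord0 j)
          (x0 ord0 j) (chi j)) g) f s y| <= (\prod_(j <- s) C j) * M.
  elim => [|j s IH] hsub y hy /=; first by rewrite big_nil mul1r; apply: hM.
  rewrite big_cons -mulrA; apply: step => //.
  - by apply: hsub; rewrite inE eqxx.
  - by apply: mulr_ge0 => //; apply: prodr_ge0 => i _; apply: le_trans (C1 i).
  - by move=> z hz; apply: IH => // i hi; apply: hsub; rewrite inE hi orbT.
apply: (le_trans (fold (enum J) _ x hx)).
  by move=> i; rewrite mem_enum.
apply: ler_wpM2r => //.
rewrite big_enum [X in _ <= X](bigID (fun j => j \in J)) /=.
apply: ler_peMr; last exact: Cprod1.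
by apply: prodr_ge0 => i _; apply: le_trans (C1 i).
Qed.
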